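(* For every weight function $\omega\colon\mathbb{N}\to\mathbb{R}^+$ and every $L\in\mathbb{N}$, the Forest distance $\mathrm{FD}_{L,\omega}$ is a well-defined pseudo-metric on $\mathcal{G}^{\mathbb{R}}_{n,d}$. In addition, for two graphs $G,H\in\mathcal{G}^{\mathbb{R}}_{n,d}$, $\mathrm{FD}_{L,\omega}(G,H)=0$ if and only if $G$ and $H$ are $1$-WL indistinguishable after $L$ iterations.
   Context: $\mathcal{G}^{\mathbb{R}}_{n,d}$ is the set of attributed graphs $(G,a_G)$ with $n$ vertices (undirected, no loops) and attribute function $a_G\colon V(G)\to\mathbb{R}^d\setminus\{\vec{0}\}$ (the zero vector is reserved for padding). The unrolling tree $\mathsf{unr}(G,u,L)$ is the rooted labeled tree defined inductively: for $L=0$ a single vertex labeled $a_G(u)$; for $L>0$ a root labeled $a_G(u)$ under which, for each neighbor $w$ of $u$, a copy of $\mathsf{unr}(G,w,L-1)$ is attached; the root has level $0$. Let $\mathcal{T}^L_G = \{\!\!\{ \tau(\mathsf{unr}(G,u,L)) : u\in V(G)\}\!\!\}$ (isomorphism types). Padding: in each tree of $\mathcal{T}^L_G$, to every vertex of level less than $L$ add children labeled $\vec{0}$ until it has exactly $n-1$ children. The disjoint union of the padded trees is the forest $F_{G,L}$; all such forests have the same unlabeled structure. For a vertex $u$ of $F_{G,L}$, $l(u)$ is its level. Then $\mathrm{FD}_{L,\omega}(G,H) = \min_{\varphi} \sum_{u\in V(F_{G,L})} \omega(l(u))\,\|a_G(u) - a_H(\varphi(u))\|_2$, where $a_G(u)$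 denotes the label of $u$ in the forest and the minimum ranges over all edge-preserving bijections $\varphi\colon V(F_{G,L})\to V(F_{H,L})$. $1$-WL on attributed graphs: $C_0(v)$ is the attribute of $v$ (injectively encoded), $C_t(v) = \mathsf{RELABEL}(C_{t-1}(v), \{\!\!\{C_{t-1}(u):u\in N(v)\}\!\!\})$ with injective $\mathsf{RELABEL}$, run on $G$ and $H$ in parallel; $G,H$ are $1$-WL indistinguishable after $L$ iterations if $\{\!\!\{C_L(v):v\in V(G)\}\!\!\} = \{\!\!\{C_L(v):v\in V(H)\}\!\!\}$. A pseudo-metric satisfies $\delta(x,x)=0$, symmetry and the triangle inequality. *)

(* Defs.v *)
From HB Require Import structures.
From mathcomp Require Import all_boot all_order all_algebra.
From mathcomp Require Import fingroup perm.
From mathcomp Require Import reals.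
Set Implicit Arguments. Unset Strict Implicit. Unset Printing Implicit Defensive.
Import Order.TTheory GRing.Theory Num.Theory.
Local Open Scope ring_scope.

Record agraph (R : realType) (n d : nat) := AGraph {
  adj  : rel 'I_n;
  attr : 'I_n -> 'rV[R]_d }.

(* Membership in G^R_{n,d}: undirected, loopless, attributes nonzero. *)
Definition valid_graph (R : realType) (n d : nat) (G : agraph R n d) : Prop :=
  [/\ forall u v, adj G u v = adj G v u,
      forall u, ~~ adj G u u
    & forall u, attr G u != 0].

Definition norm2 (R : realType) d (x : 'rV[R]_d) : R :=
  Num.sqrt (\sum_(j < d) x ord0 j ^+ 2).

(* Vertices of the (common unlabeled) forest: a tree index i : 'I_n and a
   path of child positions (each in 'I_(n-1)) of length k <= L from the root. *)
Definition fvert (n L : nat) : finType :=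
  ('I_n * {k : 'I_L.+1 & k.-tuple 'I_(n.-1)})%type.

Definition fpath n L (x : fvert n L) : seq 'I_(n.-1) := tagged x.2.
Definition flevel n L (x : fvert n L) : nat := size (fpath x).

Definition fparent n L (u v : fvert n L) : bool :=
  [&& u.1 == v.1,
      size (fpath v) == (size (fpath u)).+1
    & take (size (fpath u)) (fpath v) == fpath u].

Definition nbrs (R : realType) (n d : nat) (G : agraph R n d) (w : 'I_n) : seq 'I_n :=
  [seq x <- enum 'I_n | adj G w x].

(* The c-th child of the node corresponding to (unrolled) vertex w:
   the c-th neighbour of w if it exists, otherwise a padding vertex (None). *)
Definition fstep (R : realType) (n d : nat) (G : agraph R n d) (w : 'I_n) (c : 'I_(n.-1)) : option 'I_n :=
  if (c < size (nbrs G w))%N then Some (nth w (nbrs G w) c) else None.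

(* Following a path of child positions from the root of the unrolling tree of
   vertex i; None once a padding vertex is reached (padding vertices only have
   padding descendants). *)
Definition fwalk (R : realType) (n d : nat) (G : agraph R n d) (i : 'I_n) (p : seq 'I_(n.-1)) : option 'I_n :=
  foldl (fun o c => obind (fun w => fstep G w c) o) (Some i) p.

(* Label of a forest vertex in F_{G,L}: the attribute of the unrolled graph
   vertex, or the zero vector for padding vertices. Tree i of the forest is
   the padded unrolling tree unr(G,i,L). *)
Definition flabel (R : realType) (n d L : nat) (G : agraph R n d) (x : fvert n L) : 'rV[R]_d :=
  if fwalk G x.1 (fpath x) is Some w then attr G w else 0.

Definition edge_preserving n L (phi : {perm fvert n L}) : bool :=
  [forall u, forall v, fparent u v ==> fparent (phi u) (phi v)].

Definition fcost (R : realType) (n d L : nat) (w : nat -> R) (G H : agraph R n d)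
    (phi : {perm fvert n L}) : R :=
  \sum_(u : fvert n L) w (flevel u) * norm2 (flabel G u - flabel H (phi u)).

(* Forest distance: minimum of the cost over edge-preserving bijections
   (the identity is one, so the minimum over this finite nonempty set is
   the big-min seeded with the identity's cost). *)
Definition FD (R : realType) (n d L : nat) (w : nat -> R) (G H : agraph R n d) : R :=
  \big[Num.min/fcost w G H (1%g : {perm fvert n L})]_(phi : {perm fvert n L} | edge_preserving phi)
     fcost w G H phi.

(* Colours live in an eqType K; c0 encodes attributes, relabel takes the
   previous colour and the multiset of neighbour colours, the multiset being
   represented by a seq up to permutation: relabel is a well-defined injective
   function of (colour, multiset) iff
   relabel a s = relabel b t <-> (a = b /\ s, t are permutations). *)
Definition relabel_injective (K : eqType) (relabel : K -> seq K -> K) : Prop :=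
  forall a b s t, relabel a s = relabel b t <-> a = b /\ perm_eq s t.

Fixpoint wl_color (R : realType) (n d : nat) (K : eqType) (c0 : 'rV[R]_d -> K) (relabel : K -> seq K -> K)
    (G : agraph R n d) (t : nat) (v : 'I_n) : K :=
  match t with
  | 0 => c0 (attr G v)
  | t'.+1 => relabel (wl_color c0 relabel G t' v)
                     [seq wl_color c0 relabel G t' u | u <- nbrs G v]
  end.

Definition wl_indist (R : realType) (n d : nat) (K : eqType) (c0 : 'rV[R]_d -> K) (relabel : K -> seq K -> K)
    (L : nat) (G H : agraph R n d) : Prop :=
  perm_eq [seq wl_color c0 relabel G L v | v <- enum 'I_n]
          [seq wl_color c0 relabel H L v | v <- enum 'I_n].

(* Main.v *)
Require Import Defs.
From HB Require Import structures.
From mathcomp Require Import all_boot all_order all_algebra.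
From mathcomp Require Import fingroup perm.
From mathcomp Require Import reals.
From mathcomp Require Import ring lra.
Import Order.TTheory GRing.Theory Num.Theory.
Local Open Scope ring_scope.
Import Defs.

Lemma cauchy_schwarz (R : realType) d (a b : 'I_d -> R) :
  (\sum_i a i * b i) ^+ 2 <= (\sum_i a i ^+ 2) * (\sum_i b i ^+ 2).
Proof.
have h0 : 0 <= \sum_i \sum_j (a i * b j - a j * b i) ^+ 2.
  by apply: sumr_ge0 => i _; apply: sumr_ge0 => j _; apply: sqr_ge0.
have E : \sum_i \sum_j (a i * b j - a j * b i) ^+ 2 =
   ((\sum_i a i ^+ 2) * (\sum_i b i ^+ 2) - (\sum_i a i * b i) ^+ 2) *+ 2.
  have e1 : forall i j, (a i * b j - a j * b i) ^+ 2 =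
     a i ^+ 2 * b j ^+ 2 + b i ^+ 2 * a j ^+ 2 - ((a i * b i) * (a j * b j)) *+ 2.
    by move=> i j; ring.
  under eq_bigr => i _ do under eq_bigr => j _ do rewrite e1.
  under eq_bigr => i _ do rewrite sumrB big_split /= sumrMnl -!mulr_sumr.
  rewrite sumrB big_split /= sumrMnl -!mulr_suml expr2.
  rewrite [(\sum_i b i ^+ 2) * _]mulrC. ring.
move: h0; rewrite E pmulrn_lge0 // subr_ge0 //.
Qed.

Lemma norm2_ge0 (R : realType) d (x : 'rV[R]_d) : 0 <= norm2 x.
Proof. exact: sqrtr_ge0. Qed.

Lemma norm2_0 (R : realType) d : norm2 (0 : 'rV[R]_d) = 0.
Proof.
rewrite /norm2 big1 ?sqrtr0 // => j _; by rewrite mxE expr0n.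
Qed.

Lemma norm2N (R : realType) d (x : 'rV[R]_d) : norm2 (- x) = norm2 x.
Proof. rewrite /norm2; congr Num.sqrt; apply: eq_bigr => j _; by rewrite mxE sqrrN. Qed.

Lemma norm2_eq0 (R : realType) d (x : 'rV[R]_d) : norm2 x = 0 -> x = 0.
Proof.
move=> /eqP; rewrite /norm2 sqrtr_eq0 => h.
have hs : \sum_(j < d) x ord0 j ^+ 2 = 0.
  by apply/eqP; rewrite eq_le h sumr_ge0 // => j _; apply: sqr_ge0.
apply/matrixP => i j; rewrite (ord1 i) mxE.
apply/eqP; rewrite -sqrf_eq0; apply/eqP.
exact: (psumr_eq0P (fun j _ => sqr_ge0 (x ord0 j)) hs).
Qed.

Lemma norm2D (R : realType) d (x y : 'rV[R]_d) : norm2 (x + y) <= norm2 x + norm2 y.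
Proof.
rewrite /norm2.
set A := \sum_j x ord0 j ^+ 2. set B := \sum_j y ord0 j ^+ 2.
set S := \sum_j x ord0 j * y ord0 j.
have eS : \sum_(j < d) (x + y) ord0 j ^+ 2 = A + S *+ 2 + B.
  rewrite /A /B /S -sumrMnl -!big_split /=; apply: eq_bigr => j _; rewrite mxE; ring.
have A0 : 0 <= A by apply: sumr_ge0 => j _; apply: sqr_ge0.
have B0 : 0 <= B by apply: sumr_ge0 => j _; apply: sqr_ge0.
have hS : S <= Num.sqrt A * Num.sqrt B.
  rewrite -sqrtrM //. apply: le_trans (ler_norm S) _.
  rewrite -sqrtr_sqr; apply: ler_wsqrtr; exact: cauchy_schwarz.
rewrite eS.
have -> : Num.sqrt A + Num.sqrt B = Num.sqrt ((Num.sqrt A + Num.sqrt B) ^+ 2).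
  by rewrite sqrtr_sqr ger0_norm // addr_ge0 // sqrtr_ge0.
apply: ler_wsqrtr.
rewrite sqrrD !sqr_sqrtr //.
have : S *+ 2 <= (Num.sqrt A * Num.sqrt B) *+ 2 by rewrite lerMn2r.
lra.
Qed.

Set Implicit Arguments. Unset Strict Implicit.

Lemma fvert_eq n L (u v : fvert n L) : u.1 = v.1 -> fpath u = fpath v -> u = v.
Proof.
destruct u as [i [k t]]; destruct v as [j [k' t']]; move=> /= ->; rewrite /fpath /= => e.
have ek : k = k' by apply: val_inj; rewrite /= -(size_tuple t) -(size_tuple t') e.
subst k'. have -> : t = t' by apply: val_inj. by [].
Qed.

Lemma ex_vert n L (i : 'I_n) (s : seq 'I_(n.-1)) :
  (size s <= L)%N -> {v : fvert n L | v.1 = i /\ fpath v = s}.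
Proof.
move=> h. have h' : (size s < L.+1)%N by [].
by exists (i, existT (fun k : 'I_L.+1 => k.-tuple 'I_(n.-1)) (Ordinal h')
              (@Tuple (size s) _ s (eqxx _))).
Qed.

Lemma flevel_le n L (v : fvert n L) : (flevel v <= L)%N.
Proof. destruct v as [i [k t]]; rewrite /flevel /fpath /= size_tuple -ltnS; exact: ltn_ord. Qed.

Lemma fparent_level n L (u v : fvert n L) : fparent u v -> flevel v = (flevel u).+1.
Proof. by case/and3P => _ /eqP. Qed.

Lemma fparent_path n L (u v : fvert n L) :
  fparent u v -> v.1 = u.1 /\ exists c, fpath v = rcons (fpath u) c.
Proof.
case/and3P => /eqP e1 /eqP hs /eqP ht; split => //.
rewrite -(cat_take_drop (size (fpath u)) (fpath v)) ht.
have : size (drop (size (fpath u)) (fpath v)) = 1%N by rewrite size_drop hs subSnn.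
case: (drop _ _) => [|c [|]] //= _. by exists c; rewrite cats1.
Qed.

Lemma fparent_intro n L (u v : fvert n L) c :
  v.1 = u.1 -> fpath v = rcons (fpath u) c -> fparent u v.
Proof.
rewrite /fparent => -> ->; rewrite size_rcons !eqxx -cats1 take_size_cat //=; exact: eqxx.
Qed.

Lemma has_parent n L (v : fvert n L) : (0 < flevel v)%N -> exists u, fparent u v.
Proof.
move=> pos; have hl := flevel_le v; rewrite /flevel in hl.
have [b [c e]] : exists b c, fpath v = rcons b c.
  move: pos; rewrite /flevel; case: (fpath v) / lastP => [//|b c _]; by exists b, c.
have hb : (size b <= L)%N by move: hl; rewrite e size_rcons; apply: ltnW.
case: (ex_vert v.1 hb) => u [e1 e2].
by exists u; apply: (fparent_intro (c := c)) => //; rewrite e2.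
Qed.

Lemma ep_reflect n L (phi : {perm fvert n L}) : edge_preserving phi ->
  forall u v, fparent (phi u) (phi v) -> fparent u v.
Proof.
move=> ep u v h.
pose E := [set p : fvert n L * fvert n L | fparent p.1 p.2].
pose f := fun p : fvert n L * fvert n L => (phi p.1, phi p.2).
have finj : injective f by move=> [a b] [c e] [/perm_inj -> /perm_inj ->].
have sub : f @: E \subset E.
  apply/subsetP => _ /imsetP [p pE ->]; move: pE; rewrite !inE /= => pE.
  exact: (implyP (forallP (forallP ep p.1) p.2)).
have eqE : f @: E = E by apply/eqP; rewrite eqEcard sub (card_imset _ finj) leqnn.
have : (phi u, phi v) \in E by rewrite inE.
rewrite -eqE => /imsetP [[a b]]; rewrite inE /= => hab [ea eb].
by rewrite (perm_inj ea) (perm_inj eb).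
Qed.

Lemma ep_fwd n L (phi : {perm fvert n L}) : edge_preserving phi ->
  forall u v, fparent u v -> fparent (phi u) (phi v).
Proof. by move=> ep u v h; exact: (implyP (forallP (forallP ep u) v)). Qed.

Lemma ep_inv n L (phi : {perm fvert n L}) : edge_preserving phi -> edge_preserving phi^-1%g.
Proof.
move=> ep; apply/forallP => u; apply/forallP => v; apply/implyP => h.
by apply: (ep_reflect ep); rewrite !permKV.
Qed.

Lemma ep_mul n L (p q : {perm fvert n L}) :
  edge_preserving p -> edge_preserving q -> edge_preserving (p * q)%g.
Proof.
move=> ep eq; apply/forallP => u; apply/forallP => v; apply/implyP => h.
by rewrite !permM; apply: (ep_fwd eq); apply: (ep_fwd ep).
Qed.

Lemma ep_one n L : edge_preserving (1%g : {perm fvert n L}).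
Proof. by apply/forallP => u; apply/forallP => v; rewrite !perm1; apply/implyP. Qed.

Lemma ep_level n L (phi : {perm fvert n L}) : edge_preserving phi ->
  forall u, flevel (phi u) = flevel u.
Proof.
move=> ep u; move: {2}(flevel u) (erefl (flevel u)) => k.
elim: k u => [|k IH] u hu.
  case e: (flevel (phi u)) => [//|m].
  have : (0 < flevel (phi u))%N by rewrite e.
  case/has_parent => x hx.
  have := ep_reflect ep (u := phi^-1%g x) (v := u); rewrite permKV => /(_ hx).
  by move/fparent_level; rewrite hu.
have : (0 < flevel u)%N by rewrite hu.
case/has_parent => p hp.
have hpl : flevel p = k by move: (fparent_level hp); rewrite hu => -[].
by rewrite (fparent_level (ep_fwd ep hp)) (IH p hpl) hu hpl.
Qed.

Lemma bigmin_le (R : realType) (I : finType) (P : pred I) (F : I -> R) x0 i :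
  P i -> \big[Num.min/x0]_(j | P j) F j <= F i.
Proof.
move=> Pi; have : i \in index_enum I by rewrite mem_index_enum.
elim: (index_enum I) => // j r IH; rewrite inE big_cons.
case/orP => [/eqP <-|/IH h]; first by rewrite Pi ge_min lexx.
by case: (P j) => //; rewrite ge_min h orbT.
Qed.

Lemma bigmin_attained (R : realType) (I : finType) (P : pred I) (F : I -> R) x0 :
  (exists i, P i /\ \big[Num.min/x0]_(j | P j) F j = F i) \/
  \big[Num.min/x0]_(j | P j) F j = x0.
Proof.
apply: (big_ind (fun v => (exists i, P i /\ v = F i) \/ v = x0)); first by right.
  move=> x y hx hy; rewrite minEle; by case: ifP.
by move=> i Pi; left; exists i.
Qed.

Lemma FD_le (R : realType) n d L (w : nat -> R) (G H : agraph R n d) (phi : {perm fvert n L}) :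
  edge_preserving phi -> FD L w G H <= fcost w G H phi.
Proof. exact: bigmin_le. Qed.

Lemma FD_attained (R : realType) n d L (w : nat -> R) (G H : agraph R n d) :
  exists phi : {perm fvert n L}, edge_preserving phi /\ FD L w G H = fcost w G H phi.
Proof.
case: (bigmin_attained (fun phi : {perm fvert n L} => edge_preserving phi)
        (@fcost R n d L w G H) (fcost w G H (1%g : {perm fvert n L}))) => [[phi [h1 h2]]|h].
  by exists phi.
by exists 1%g; split; [exact: ep_one|].
Qed.

Lemma fcost_ge0 (R : realType) n d L (w : nat -> R) (hw : forall l, 0 < w l)
   (G H : agraph R n d) (phi : {perm fvert n L}) : 0 <= fcost w G H phi.
Proof.
apply: sumr_ge0 => u _; apply: mulr_ge0; [exact: ltW|exact: norm2_ge0].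
Qed.

Lemma FD_ge0 (R : realType) n d L (w : nat -> R) (hw : forall l, 0 < w l)
   (G H : agraph R n d) : 0 <= FD L w G H.
Proof. by case: (FD_attained L w G H) => phi [_ ->]; apply: fcost_ge0. Qed.


Lemma FD_refl (R : realType) n d L (w : nat -> R) (hw : forall l, 0 < w l)
  (G : agraph R n d) : FD L w G G = 0.
Proof.
apply/eqP; rewrite eq_le FD_ge0 // andbT.
apply: le_trans (FD_le w G G (ep_one n L)) _.
rewrite /fcost big1 // => u _; by rewrite perm1 subrr norm2_0 mulr0.
Qed.

Lemma FD_sym_le (R : realType) n d L (w : nat -> R)
  (G H : agraph R n d) : FD L w H G <= FD L w G H.
Proof.
case: (FD_attained L w G H) => phi [ep ->].
apply: le_trans (FD_le w H G (ep_inv ep)) _.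
rewrite /fcost (reindex_inj (@perm_inj _ phi)) /=.
rewrite le_eqVlt; apply/orP; left; apply/eqP; apply: eq_bigr => u _.
by rewrite permK (ep_level ep) -norm2N opprB.
Qed.

Lemma FD_triangle (R : realType) n d L (w : nat -> R) (hw : forall l, 0 < w l)
  (G H K : agraph R n d) : FD L w G K <= FD L w G H + FD L w H K.
Proof.
case: (FD_attained L w G H) => p1 [ep1 ->].
case: (FD_attained L w H K) => p2 [ep2 ->].
apply: le_trans (FD_le w G K (ep_mul ep1 ep2)) _.
have -> : fcost w H K p2 =
   \sum_u w (flevel u) * norm2 (flabel H (p1 u) - flabel K (p2 (p1 u))).
  by rewrite /fcost (reindex_inj (@perm_inj _ p1)) /=; apply: eq_bigr => u _; rewrite (ep_level ep1).
rewrite /fcost -big_split /=; apply: ler_sum => u _.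
rewrite permM -mulrDr; apply: ler_wpM2l; first exact: ltW.
have -> : flabel G u - flabel K (p2 (p1 u)) =
   (flabel G u - flabel H (p1 u)) + (flabel H (p1 u) - flabel K (p2 (p1 u))).
  by rewrite addrA subrK.
exact: norm2D.
Qed.


Lemma enum_form (T : Type) m (s : seq T) x0 : (size s <= m)%N ->
  map (fun c : 'I_m => if (c < size s)%N then Some (nth x0 s c) else None) (enum 'I_m)
  = map Some s ++ nseq (m - size s) None.
Proof.
move=> hs.
rewrite (_ : map _ (enum 'I_m) =
   map (fun k => if (k < size s)%N then Some (nth x0 s k) else None) (map val (enum 'I_m)));
  last by rewrite -map_comp.
rewrite val_enum_ord -(subnKC hs) iotaD map_cat subnKC // add0n.
congr (_ ++ _).
  rewrite -[in RHS](mkseq_nth x0 s) /mkseq -map_comp; apply/eq_in_map => k.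
  by rewrite mem_iota add0n => /andP [_ ->].
have gen : forall k j, (size s <= j)%N ->
   map (fun k => if (k < size s)%N then Some (nth x0 s k) else None) (iota j k) = nseq k None.
  elim=> [//|k IH] j hj /=; rewrite ltnNge hj IH //; exact: leqW.
exact: gen.
Qed.

Lemma pmap_id_form (T : Type) (s : seq T) k : pmap id (map Some s ++ nseq k None) = s.
Proof.
rewrite pmap_cat; elim: s => [|x s IH] /=; last by rewrite IH.
by elim: k.
Qed.

Lemma pmap_idE (A B : Type) (f : A -> option B) l : pmap f l = pmap id (map f l).
Proof. by elim: l => //= x l ->; case: (f x). Qed.

Lemma map_pmapE (A B C : Type) (f : B -> C) (g : A -> option B) s :
  map f (pmap g s) = pmap (fun x => omap f (g x)) s.
Proof. by elim: s => //= x s IH; case: (g x) => //= y; rewrite IH. Qed.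

Lemma pmap_mapE (A B C : Type) (f : B -> option C) (g : A -> B) s :
  pmap f (map g s) = pmap (fun x => f (g x)) s.
Proof. by elim: s => //= x s ->. Qed.

Lemma nbrs_size (R : realType) n d (G : agraph R n d) x :
  valid_graph G -> (size (nbrs G x) <= n.-1)%N.
Proof.
case=> _ hl _.
have h : (size (x :: nbrs G x) <= size (enum 'I_n))%N.
  apply: uniq_leq_size; last by move=> y _; rewrite mem_enum.
  rewrite /= filter_uniq ?enum_uniq // andbT mem_filter.
  by rewrite (negbTE (hl x)).
move: h; rewrite size_enum_ord /= => h; rewrite -ltnS; apply: leq_trans h _; exact: leqSpred.
Qed.

Lemma fstep_map (R : realType) n d (G : agraph R n d) x : valid_graph G ->
  map (fstep G x) (enum 'I_(n.-1)) = map Some (nbrs G x) ++ nseq (n.-1 - size (nbrs G x)) None.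
Proof. move=> vG; rewrite -(enum_form x (nbrs_size x vG)); apply: eq_map => c. by []. Qed.

Lemma wl_attr (R : realType) n d (C : eqType) (c0 : 'rV[R]_d -> C) relabel
  (G H : agraph R n d) :
  injective c0 -> relabel_injective relabel ->
  forall t x y, wl_color c0 relabel G t x = wl_color c0 relabel H t y -> attr G x = attr H y.
Proof.
move=> ic ir; elim=> [|t IH] x y /=; first exact: ic.
by move/ir => [/IH].
Qed.

Definition wk (R : realType) n d L (G : agraph R n d) (u : fvert n L) : option 'I_n :=
  fwalk G u.1 (fpath u).

Lemma wk_child (R : realType) n d L (G : agraph R n d) (u v : fvert n L) c :
  v.1 = u.1 -> fpath v = rcons (fpath u) c -> wk G v = obind (fun x => fstep G x c) (wk G u).
Proof. by rewrite /wk /fwalk => -> ->; rewrite foldl_rcons. Qed.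

Definition children n L (u : fvert n L) := [seq v <- enum (fvert n L) | fparent u v].

Lemma children_perm n L (u : fvert n L) : (flevel u < L)%N ->
  exists ch : 'I_(n.-1) -> fvert n L,
    (forall c, (ch c).1 = u.1 /\ fpath (ch c) = rcons (fpath u) c) /\
    perm_eq (children u) (map ch (enum 'I_(n.-1))).
Proof.
move=> hl.
have hc : forall c, (size (rcons (fpath u) c) <= L)%N by move=> c; rewrite size_rcons.
exists (fun c => sval (ex_vert u.1 (hc c))).
have P c : (sval (ex_vert u.1 (hc c))).1 = u.1 /\ fpath (sval (ex_vert u.1 (hc c))) = rcons (fpath u) c.
  exact: (svalP (ex_vert u.1 (hc c))).
split => //.
apply: uniq_perm.
- by rewrite filter_uniq // enum_uniq.
- rewrite map_inj_uniq ?enum_uniq // => c1 c2 e.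
  have := (P c2).2; rewrite -e (P c1).2 => /rcons_inj [].
  done.
move=> v; rewrite mem_filter mem_enum andbT.
apply/idP/mapP.
  case/fparent_path => e1 [c e2]; exists c; first by rewrite mem_enum.
  apply: fvert_eq; rewrite ?(P c).1 ?(P c).2 //.
case=> c _ ->; apply: (fparent_intro (c := c)); [exact: (P c).1|exact: (P c).2].
Qed.

Lemma children_walk (R : realType) n d L (G : agraph R n d) (u : fvert n L) x :
  valid_graph G -> (flevel u < L)%N -> wk G u = Some x ->
  perm_eq (pmap (wk G) (children u)) (nbrs G x).
Proof.
move=> vG hl hx; case: (children_perm hl) => ch [hch hp].
apply: perm_trans (perm_pmap _ hp) _.
rewrite pmap_mapE.
rewrite (eq_pmap (f2 := fstep G x)); last first.
  by move=> c; rewrite (wk_child G (hch c).1 (hch c).2) hx.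
by rewrite pmap_idE fstep_map // pmap_id_form.
Qed.

Lemma children_phi n L (phi : {perm fvert n L}) (u : fvert n L) :
  edge_preserving phi -> perm_eq (map phi (children u)) (children (phi u)).
Proof.
move=> ep; apply: uniq_perm.
- rewrite map_inj_uniq; [by rewrite filter_uniq // enum_uniq | exact: perm_inj].
- by rewrite filter_uniq // enum_uniq.
move=> v; rewrite mem_filter mem_enum andbT; apply/mapP/idP.
  by case=> a; rewrite mem_filter mem_enum andbT => h ->; apply: ep_fwd.
move=> h; exists (phi^-1%g v); last by rewrite permKV.
rewrite mem_filter mem_enum andbT; apply: (ep_reflect ep); by rewrite permKV.
Qed.

Lemma dir1_claim (R : realType) n d L (C : eqType) (c0 : 'rV[R]_d -> C) relabel
  (G H : agraph R n d) (phi : {perm fvert n L}) :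
  injective c0 -> relabel_injective relabel -> valid_graph G -> valid_graph H ->
  edge_preserving phi -> (forall u, flabel G u = flabel H (phi u)) ->
  forall t (u : fvert n L), (flevel u + t <= L)%N ->
   omap (wl_color c0 relabel G t) (wk G u) = omap (wl_color c0 relabel H t) (wk H (phi u)).
Proof.
move=> ic ir vG vH ep hlab; elim=> [|t IH] u hu.
  move: (hlab u); rewrite /flabel /wk.
  case: (fwalk G _ _) => [x|]; case: (fwalk H _ _) => [y|] //=.
  - by move=> ->.
  - by move=> e; case: vG => _ _ /(_ x); rewrite e eqxx.
  - by move=> e; case: vH => _ _ /(_ y); rewrite -e eqxx.
have hu' : (flevel u + t <= L)%N by apply: leq_trans hu; rewrite leq_add2l.
have hl : (flevel u < L)%N by apply: leq_trans hu; rewrite -addn1 leq_add2l.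
have := IH u hu'.
case ex: (wk G u) => [x|]; case ey: (wk H (phi u)) => [y|] //= [exy].
congr Some; apply/ir; split => //.
have hG := children_walk vG hl ex.
have hl2 : (flevel (phi u) < L)%N by rewrite (ep_level ep).
have hH := children_walk vH hl2 ey.
have hG2 : perm_eq (nbrs G x) (pmap (wk G) (children u)) by rewrite perm_sym.
apply: perm_trans (perm_map (wl_color c0 relabel G t) hG2) _.
apply: perm_trans _ (perm_map (wl_color c0 relabel H t) hH).
rewrite !map_pmapE.
rewrite (eq_in_pmap (f2 := fun v => omap (wl_color c0 relabel H t) (wk H (phi v)))); last first.
  move=> v; rewrite mem_filter mem_enum andbT => /fparent_level hv.
  by apply: IH; rewrite hv addSnnS.
rewrite -(pmap_mapE (fun v => omap (wl_color c0 relabel H t) (wk H v)) phi).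
exact: perm_pmap (children_phi u ep).
Qed.


Lemma val_mktuple (U : Type) m (F : 'I_m -> U) : val [tuple F i | i < m] = map F (enum 'I_m).
Proof. by rewrite -val_ord_tuple. Qed.

Lemma perm_exists (T : eqType) m (f g : 'I_m -> T) :
  perm_eq (map f (enum 'I_m)) (map g (enum 'I_m)) -> exists p : {perm 'I_m}, forall i, f i = g (p i).
Proof.
rewrite -(val_mktuple g) => /tuple_permP [p e]; exists p => i.
move: e; rewrite val_mktuple => /eq_in_map /(_ i (mem_enum _ _)) ->.
by rewrite tnth_mktuple.
Qed.

Definition pick_perm (T : eqType) m (f g : 'I_m -> T) : {perm 'I_m} :=
  odflt 1%g [pick p : {perm 'I_m} | [forall i, f i == g (p i)]].

Lemma pick_permP (T : eqType) m (f g : 'I_m -> T) :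
  (exists p : {perm 'I_m}, forall i, f i = g (p i)) -> forall i, f i = g (pick_perm f g i).
Proof.
move=> [p hp]; rewrite /pick_perm; case: pickP => [q /forallP hq|/(_ p)] /=.
  by move=> i; apply/eqP.
by move/forallP => []; move=> i; apply/eqP.
Qed.

Section Dir2.
Variables (R : realType) (n d L : nat) (C : eqType) (c0 : 'rV[R]_d -> C)
  (relabel : C -> seq C -> C) (G H : agraph R n d).
Hypotheses (ic : injective c0) (ir : relabel_injective relabel)
  (vG : valid_graph G) (vH : valid_graph H).

Local Notation wlG := (wl_color c0 relabel G).
Local Notation wlH := (wl_color c0 relabel H).

Definition cfG t x (c : 'I_(n.-1)) : option C := omap (wlG t) (fstep G x c).
Definition cfH t y (c : 'I_(n.-1)) : option C := omap (wlH t) (fstep H y c).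

Lemma cf_map (K : agraph R n d) (vK : valid_graph K) (F : 'I_n -> C) x :
  map (fun c => omap F (fstep K x c)) (enum 'I_(n.-1)) =
  map Some (map F (nbrs K x)) ++ nseq (n.-1 - size (nbrs K x)) None.
Proof.
rewrite (map_comp (omap F) (fstep K x)) fstep_map // map_cat map_nseq /=.
by rewrite -!map_comp.
Qed.

Lemma cf_perm t x y : wlG t.+1 x = wlH t.+1 y ->
  exists p : {perm 'I_(n.-1)}, forall c, cfG t x c = cfH t y (p c).
Proof.
move=> /ir [_ hp]; apply: perm_exists.
rewrite /cfG /cfH !cf_map //.
have hs : size (nbrs G x) = size (nbrs H y).
  by move: (perm_size hp); rewrite !size_map.
rewrite hs; apply: perm_cat => //; exact: perm_map.
Qed.

Fixpoint tr (t : nat) (ox oy : option 'I_n) (p : seq 'I_(n.-1)) : seq 'I_(n.-1) :=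
  match p with
  | [::] => [::]
  | c :: p' =>
     let pi := match ox, oy with
               | Some x, Some y => pick_perm (cfG t.-1 x) (cfH t.-1 y)
               | _, _ => 1%g end in
     pi c :: tr t.-1 (obind (fun x => fstep G x c) ox)
                     (obind (fun y => fstep H y (pi c)) oy) p'
  end.

Lemma size_tr t ox oy p : size (tr t ox oy p) = size p.
Proof. by elim: p t ox oy => //= c p IH t ox oy; rewrite IH. Qed.

Lemma tr_take t ox oy p k : take k (tr t ox oy p) = tr t ox oy (take k p).
Proof.
elim: p t ox oy k => [|c p IH] t ox oy [|k] //=; by rewrite IH.
Qed.

Lemma tr_inj t ox oy p1 p2 : tr t ox oy p1 = tr t ox oy p2 -> p1 = p2.
Proof.
elim: p1 t ox oy p2 => [|c1 p1 IH] t ox oy [|c2 p2] //= [/perm_inj e]; subst c2.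
by move/IH => ->.
Qed.

Definition walkG (o : option 'I_n) (p : seq 'I_(n.-1)) :=
  foldl (fun o c => obind (fun w => fstep G w c) o) o p.
Definition walkH (o : option 'I_n) (p : seq 'I_(n.-1)) :=
  foldl (fun o c => obind (fun w => fstep H w c) o) o p.

Definition compat t (ox oy : option 'I_n) : bool :=
  match ox, oy with
  | Some x, Some y => wlG t x == wlH t y
  | None, None => true
  | _, _ => false
  end.

Lemma tr_compat p : forall t ox oy, (size p <= t)%N -> compat t ox oy ->
  compat (t - size p) (walkG ox p) (walkH oy (tr t ox oy p)).
Proof.
elim: p => [|c p IH] t ox oy /=; first by rewrite subn0.
case: t => [//|t] hs hc; rewrite subSS /=.
apply: IH => //.
case: ox hc => [x|]; case: oy => [y|] //= /eqP e.
  have := pick_permP (cf_perm e) c; rewrite /cfG /cfH.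
  by case: (fstep G x c) => [a|]; case: (fstep H y _) => [b|] //= [->].
Qed.

Variables (sigma : {perm 'I_n}).
Hypothesis hsigma : forall i, wlG L i = wlH L (sigma i).

Lemma tr_sizeP (u : fvert n L) :
  size (tr L (Some u.1) (Some (sigma u.1)) (fpath u)) == tag u.2.
Proof. by rewrite size_tr /fpath size_tuple. Qed.

Definition phif (u : fvert n L) : fvert n L :=
  (sigma u.1, existT (fun k : 'I_L.+1 => k.-tuple 'I_(n.-1)) (tag u.2) (Tuple (tr_sizeP u))).

Lemma phif1 u : (phif u).1 = sigma u.1.
Proof. by []. Qed.

Lemma phif_path u : fpath (phif u) = tr L (Some u.1) (Some (sigma u.1)) (fpath u).
Proof. by []. Qed.

Lemma phif_inj : injective phif.
Proof.
move=> u v e.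
have e1 : u.1 = v.1 by apply: (@perm_inj _ sigma); rewrite -!phif1 e.
apply: fvert_eq => //.
have := congr1 (@fpath n L) e; rewrite !phif_path -e1; exact: tr_inj.
Qed.

Definition phi := perm phif_inj.

Lemma phi_ep : edge_preserving phi.
Proof.
apply/forallP => u; apply/forallP => v; apply/implyP => h.
case: (fparent_path h) => e1 [c e2].
rewrite /phi !permE /fparent !phif1 e1 eqxx /= !phif_path e1 e2 !size_tr size_rcons eqxx /=.
by rewrite tr_take -cats1 take_size_cat.
Qed.

Lemma phi_lab u : flabel G u = flabel H (phi u).
Proof.
rewrite /phi permE /flabel phif_path phif1.
have hc : compat L (Some u.1) (Some (sigma u.1)) by rewrite /= hsigma.
have := tr_compat (flevel_le u) hc.
rewrite /walkG /walkH /fwalk.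
case: (foldl _ _ _) => [x|]; case: (foldl _ _ _) => [y|] //= /eqP.
exact: wl_attr.
Qed.

Lemma dir2_cost (w : nat -> R) : fcost w G H phi = 0.
Proof. by rewrite /fcost big1 // => u _; rewrite -phi_lab subrr norm2_0 mulr0. Qed.

End Dir2.


Lemma dir1 (R : realType) n d L (w : nat -> R) (hw : forall l, 0 < w l)
  (C : eqType) (c0 : 'rV[R]_d -> C) relabel (G H : agraph R n d) :
  injective c0 -> relabel_injective relabel -> valid_graph G -> valid_graph H ->
  FD L w G H = 0 -> wl_indist c0 relabel L G H.
Proof.
move=> ic ir vG vH h0; case: (FD_attained L w G H) => phi [ep e]; rewrite e /fcost in h0.
have hlab : forall u, flabel G u = flabel H (phi u).
  move=> u.
  have hn : forall v, true -> 0 <= w (flevel v) * norm2 (flabel G v - flabel H (phi v)).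
    by move=> v _; apply: mulr_ge0; [exact: ltW | exact: norm2_ge0].
  have := psumr_eq0P hn h0 (i := u) isT.
  move/eqP; rewrite mulf_eq0 (gt_eqF (hw _)) /= => /eqP /norm2_eq0 /eqP.
  by rewrite subr_eq0 => /eqP.
pose r := fun i : 'I_n => sval (ex_vert (L := L) i (s := [::]) (leq0n L)).
have r1 : forall i, (r i).1 = i /\ fpath (r i) = [::].
  move=> i; exact: (svalP (ex_vert (L := L) i (s := [::]) (leq0n L))).
have hp : forall i, fpath (phi (r i)) = [::].
  move=> i; apply: size0nil; change (flevel (phi (r i)) = 0%N).
  by rewrite (ep_level ep) /flevel (r1 i).2.
pose s := fun i => (phi (r i)).1.
have hs : forall i, wl_color c0 relabel G L i = wl_color c0 relabel H L (s i).
  move=> i.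
  have hl : (flevel (r i) + L <= L)%N by rewrite /flevel (r1 i).2.
  have := dir1_claim ic ir vG vH ep hlab hl.
  by rewrite /wk (r1 i).2 (r1 i).1 hp /= => -[].
have sinj : injective s.
  move=> i j ee.
  have : phi (r i) = phi (r j) by apply: fvert_eq => //; rewrite !hp.
  by move/perm_inj => e'; rewrite -(r1 i).1 -(r1 j).1 e'.
rewrite /wl_indist.
have -> : [seq wl_color c0 relabel G L v | v <- enum 'I_n] =
          map (wl_color c0 relabel H L) (map s (enum 'I_n)).
  by rewrite -[in RHS]map_comp; apply/eq_in_map => i _; exact: hs.
apply: perm_map; apply: uniq_perm; [by rewrite map_inj_uniq // enum_uniq | exact: enum_uniq |].
move=> i; rewrite mem_enum; case: (injF_bij sinj) => g gK Kg.
apply/mapP; exists (g i); [by rewrite mem_enum | by rewrite Kg].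
Qed.

Lemma dir2 (R : realType) n d L (w : nat -> R) (hw : forall l, 0 < w l)
  (C : eqType) (c0 : 'rV[R]_d -> C) relabel (G H : agraph R n d) :
  injective c0 -> relabel_injective relabel -> valid_graph G -> valid_graph H ->
  wl_indist c0 relabel L G H -> FD L w G H = 0.
Proof.
move=> ic ir vG vH hwl; case: (perm_exists hwl) => sigma hsig.
apply/eqP; rewrite eq_le FD_ge0 // andbT.
rewrite -(dir2_cost ic ir vG vH hsig w); apply: FD_le; exact: phi_ep.
Qed.

Unset Implicit Arguments. Set Strict Implicit.

Theorem mainTheorem3 (R : realType) (n d : nat) (w : nat -> R)
    (hw : forall l, 0 < w l) (L : nat) :
  (forall G : agraph R n d, valid_graph G -> FD L w G G = 0) /\
  (forall G H : agraph R n d, valid_graph G -> valid_graph H ->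
     FD L w G H = FD L w H G) /\
  (forall G H K : agraph R n d, valid_graph G -> valid_graph H -> valid_graph K ->
     FD L w G K <= FD L w G H + FD L w H K) /\
  (forall (C : eqType) (c0 : 'rV[R]_d -> C) (relabel : C -> seq C -> C),
     injective c0 -> relabel_injective relabel ->
     forall G H : agraph R n d, valid_graph G -> valid_graph H ->
       FD L w G H = 0 <-> wl_indist c0 relabel L G H).
Proof.
split; first by move=> G _; exact: FD_refl.
split; first by move=> G H _ _; apply/eqP; rewrite eq_le !FD_sym_le.
split; first by move=> G H K _ _ _; exact: FD_triangle.
move=> C c0 relabel ic ir G H vG vH; split.
  exact: (dir1 (L:=L) hw ic ir vG vH).
exact: (dir2 (L:=L) hw ic ir vG vH).
Qed.
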